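(* There is an $\omega$-regular language that is not recognized by any RPA.
   Context: A Büchi automaton $(Q,\Sigma,q_0,\Delta,F)$ with $\Delta\subseteq Q\times\Sigma\times Q$ accepts an infinite word if it has a run (from $q_0$) visiting $F$ infinitely often; $\omega$-regular languages are those recognized by Büchi automata. A Parikh automaton of dimension $d$ is $\mathcal{A}=(Q,\Sigma,q_0,\Delta,F,C)$ with finite $Q$, $q_0\in Q$, $F\subseteq Q$, finite $\Delta\subseteq Q\times\Sigma\times\mathbb{N}^d\times Q$ and semi-linear $C\subseteq\mathbb{N}^d$ (a finite union of sets $\{b_0+\sum_{j=1}^\ell b_jz_j\mid z_j\in\mathbb{N}\}$, $b_j\in\mathbb{N}^d$). A run on an infinite word $\alpha$ is $r_1r_2\cdots$ with $r_i=(p_{i-1},\alpha_i,\mathbf{v}_i,p_i)\in\Delta$, $p_0=q_0$, and $\rho(r_1\cdots r_i)=\sum_{k\le i}\mathbf{v}_k$. A (synchronous) reachability Parikh automaton (RPA) is such an automaton where the run is accepting if there is $i\ge1$ with $p_i\in F$ and $\rho(r_1\cdots r_i)\in C$; it recognizes the set of infinite words having an accepting run. The transition relation need not be complete. *)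

(* Defs.v *)
From Stdlib Require List.
From mathcomp Require Import all_boot.
Set Implicit Arguments. Unset Strict Implicit. Unset Printing Implicit Defensive.

(* Infinite words over Sigma: alpha_{i+1} (paper, 1-indexed) is w i. *)
Definition word (Sigma : finType) := nat -> Sigma.

Record buchi (Sigma : finType) := Buchi {
  b_Q : finType;
  b_q0 : b_Q;
  b_Delta : b_Q -> Sigma -> b_Q -> bool;
  b_F : {set b_Q}
}.

Definition buchi_accepts (Sigma : finType) (B : buchi Sigma) (w : word Sigma) : Prop :=
  exists p : nat -> b_Q B,
    p 0 = @b_q0 _ B /\
    (forall i, @b_Delta _ B (p i) (w i) (p i.+1)) /\
    (forall N, exists i, N <= i /\ p i \in @b_F _ B).

Definition omega_regular (Sigma : finType) (L : word Sigma -> Prop) : Prop :=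
  exists B : buchi Sigma, forall w, L w <-> buchi_accepts B w.

Definition vec (d : nat) := {ffun 'I_d -> nat}.

(* a linear set {b0 + sum_j bs_j z_j | z_j ∈ N} given by (b0, bs) *)
Definition in_linear (d : nat) (L : vec d * seq (vec d)) (v : vec d) : Prop :=
  exists z : nat -> nat,
    forall k : 'I_d,
      v k = L.1 k + \sum_(j < size L.2) z j * (nth L.1 L.2 j) k.

(* a semilinear set: a finite union of linear sets *)
Definition semilinear (d : nat) := seq (vec d * seq (vec d)).

Definition in_semilinear (d : nat) (C : semilinear d) (v : vec d) : Prop :=
  exists2 L, List.In L C & in_linear L v.

Record rpa (Sigma : finType) := RPA {
  r_Q : finType;
  r_d : nat;
  r_q0 : r_Q;
  r_Delta : seq (r_Q * Sigma * vec r_d * r_Q);  (* finite Delta *)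
  r_F : {set r_Q};
  r_C : semilinear r_d
}.

Definition tr_src (Q Sigma : finType) d (t : Q * Sigma * vec d * Q) := t.1.1.1.
Definition tr_let (Q Sigma : finType) d (t : Q * Sigma * vec d * Q) := t.1.1.2.
Definition tr_vec (Q Sigma : finType) d (t : Q * Sigma * vec d * Q) := t.1.2.
Definition tr_tgt (Q Sigma : finType) d (t : Q * Sigma * vec d * Q) := t.2.

(* run r_1 r_2 ... (here r 0, r 1, ...) on w; accepting if for some prefix
   r_1 ... r_i (i >= 1; here r 0 ... r i) the last target is in F and the
   sum of the vectors is in C *)
Definition rpa_accepts (Sigma : finType) (A : rpa Sigma) (w : word Sigma) : Prop :=
  exists r : nat -> (r_Q A * Sigma * vec (r_d A) * r_Q A),
    (forall i, r i \in @r_Delta _ A) /\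
    tr_src (r 0) = @r_q0 _ A /\
    (forall i, tr_let (r i) = w i) /\
    (forall i, tr_tgt (r i) = tr_src (r i.+1)) /\
    (exists i, tr_tgt (r i) \in @r_F _ A /\
       in_semilinear (@r_C _ A)
         [ffun k => \sum_(m < i.+1) tr_vec (r m) k]).

Definition rpa_recognizes (Sigma : finType) (A : rpa Sigma) (L : word Sigma -> Prop) : Prop :=
  forall w, L w <-> rpa_accepts A w.

(* Main.v *)
Require Import Defs.
From mathcomp Require Import all_boot.
From mathcomp Require Import zify.
From Stdlib Require Import Classical.

Lemma pigeon (Q : finType) (f : nat -> Q) (s0 : nat) :
  exists k1 k2, k1 < k2 /\ k2 <= #|Q| /\ f (s0 + k1) = f (s0 + k2).
Proof.
apply: NNPP => H.
pose g := fun k : 'I_(#|Q|.+1) => f (s0 + k).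
have inj : injective g.
  move=> k1 k2 /= E; apply/val_inj => /=.
  case: (ltngtP k1 k2) => // Hlt.
  - exfalso; apply: H; exists k1, k2; have := ltn_ord k2; split => //; lia.
  - exfalso; apply: H; exists k2, k1; have := ltn_ord k1; split => //; lia.
have := leq_card _ inj; rewrite card_ord; lia.
Qed.

Definition Lw (w : word bool) : Prop := forall N, exists n, N <= n /\ w n = true.

Lemma Lw_reg : omega_regular Lw.
Proof.
exists (@Buchi bool bool false (fun p c q => q == c) [set true]).
move=> w; split.
- move=> H; exists (fun i => if i is j.+1 then w j else false); split => //; split.
    by move=> i /=.
  move=> N; have [n [Hn Hw]] := H N; exists n.+1; split; first lia.
  by rewrite /= Hw inE.
- move=> [p [H0 [HD HF]]] N; have [i [Hi Hin]] := HF N.+1.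
  case: i Hi Hin => [|i] Hi Hin; first lia.
  exists i; split; first lia.
  move: (HD i) => /= /eqP <-. by move: Hin; rewrite inE => /eqP.
Qed.

Section Main.
Variable A : rpa bool.
Hypothesis HA : rpa_recognizes A Lw.

Let N := #|r_Q A|.
Let w : word bool := fun n => n %% N.+1 == N.

Lemma w_in : Lw w.
Proof.
move=> M; exists (M * N.+1 + N); split; first lia.
rewrite /w modnMDl modn_small //; exact: eqxx.
Qed.

Lemma contra : False.
Proof.
have [r [Hdelta [H0 [Hlet [Hcon [i [HiF HiC]]]]]]] := (HA w).1 w_in.
set s0 := i.+1 * N.+1.
have [k1 [k2 [Hk12 [Hk2 Heq]]]] := pigeon _ (fun j => tr_src (r j)) s0.
set s := s0 + k1 in Heq *.
set P := k2 - k1.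
have HP : 0 < P by rewrite /P; lia.
pose r' := fun j => if j < s then r j else r (s + (j - s) %% P).
have r'E : forall j, j <= i -> r' j = r j.
  move=> j Hj; rewrite /r'; have -> : j < s by rewrite /s /s0; lia. done.
have acc : rpa_accepts A (fun j => tr_let (r' j)).
  exists r'; split.
    by move=> j; rewrite /r'; case: ifP.
  split; first by rewrite r'E.
  split; first by [].
  split.
    move=> j; rewrite /r'.
    have [Hj|[Hj|Hj]] : j.+1 < s \/ j.+1 = s \/ s < j.+1 by lia.
    - have -> : j < s by lia. by rewrite Hj.
    - rewrite -Hj ltnSn.
      have -> : (j.+1 < j.+1) = false by rewrite ltnn.
      by rewrite subnn mod0n addn0 Hcon.
    - have -> : (j < s) = false by lia.
      have -> : (j.+1 < s) = false by lia.
      have [Hlt|Hge] := ltnP ((j - s) %% P).+1 P.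
        have -> : (j.+1 - s) %% P = ((j - s) %% P).+1.
          have -> : j.+1 - s = (j - s).+1 by lia.
          by rewrite -addn1 -modnDml addn1 modn_small.
        by rewrite Hcon addnS.
      have HmP : (j - s) %% P = P.-1.
        have := ltn_pmod (j - s) HP; lia.
      have -> : (j.+1 - s) %% P = 0.
        have -> : j.+1 - s = (j - s).+1 by lia.
        by rewrite -addn1 -modnDml HmP addn1 prednK // modnn.
      rewrite HmP addn0 Hcon.
      have -> : (s + P.-1).+1 = s0 + k2 by rewrite /s /P; lia.
      by rewrite -Heq.
  exists i; rewrite r'E //; split => //.
  suff -> : [ffun k => \sum_(m < i.+1) tr_vec (r' m) k] =
            [ffun k => \sum_(m < i.+1) tr_vec (r m) k] by [].
  apply/ffunP => k; rewrite !ffunE; apply: eq_bigr => m _.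
  by rewrite r'E // -ltnS.
have := (HA _).2 acc s; move=> [n [Hn Hw]].
move: Hw; rewrite /r'; have -> : (n < s) = false by lia.
rewrite Hlet /w.
set m := (n - s) %% P.
have Hm : m < P by apply: ltn_pmod.
have -> : (s + m) %% N.+1 = k1 + m.
  rewrite /s /s0 -addnA modnMDl modn_small //; rewrite /P in Hm; lia.
move/eqP; rewrite /P in Hm; lia.
Qed.
End Main.

Theorem lemma1 :
  exists (Sigma : finType) (L : word Sigma -> Prop),
    omega_regular L /\ forall A : rpa Sigma, ~ rpa_recognizes A L.
Proof.
exists bool, Lw; split; first exact: Lw_reg.
move=> A HA; exact: (@contra A HA).
Qed.
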